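(* Let $r,K,\alpha,\phi,c,m_1,m_2,\lambda,a,d,\delta,\gamma,\sigma,\eta$ be positive constants with $\phi<1$ and $m_1>m_2$, and consider the system \[ \begin{cases} \dot X = rX\left(1-\frac{X}{K}\right)-\frac{\alpha XS}{c+X}-\frac{\phi\alpha XI}{c+X},\\[1mm] \dot S = \frac{m_1\alpha XS}{c+X}-\frac{\lambda AS}{a+A}-dS,\\[1mm] \dot I = \frac{m_2\phi\alpha XI}{c+X}+\frac{\lambda AS}{a+A}-(d+\delta)I,\\[1mm] \dot A = \gamma+\sigma(S+I)-\eta A. \end{cases} \] The pest-free equilibrium $E_1=(K,0,0,\gamma/\eta)$ is (locally) stable if \[ \frac{m_1\alpha K}{c+K}<\frac{\lambda\gamma}{a\eta+\gamma}+d\quad\text{and}\quad \frac{m_2\phi\alpha K}{c+K}<d+\delta, \] and unstable if \[ \frac{m_1\alpha K}{c+K}>\frac{\lambda\gamma}{a\eta+\gamma}+d\quad\text{or}\quad \frac{m_2\phi\alpha K}{c+K}>d+\delta. \] *)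

(* Defs.v *)
From HB Require Import structures.
From mathcomp Require Import all_boot all_order all_algebra.
From mathcomp Require Import all_classical all_reals all_analysis.
From mathcomp.real_closed Require Import complex.
Set Implicit Arguments. Unset Strict Implicit. Unset Printing Implicit Defensive.
Import Order.TTheory GRing.Theory Num.Theory.
Local Open Scope ring_scope.

(* State vector (X, S, I, A) as a function 'I_4 -> R:
   component 0 = X (prey/crop), 1 = S, 2 = I, 3 = A. *)
Definition st (R : realType) := 'I_4 -> R.

Definition pest_field (R : realType)
  (r K alpha phi c m1 m2 lambda a d delta gamma sigma eta : R)
  (x : st R) : st R :=
  fun i =>
    let X := x ord0 in
    let S := x (inord 1) in
    let I := x (inord 2) in
    let A := x (inord 3) in
    match val i with
    | 0 => r * X * (1 - X / K) - alpha * X * S / (c + X) - phi * alpha * X * I / (c + X)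
    | 1 => m1 * alpha * X * S / (c + X) - lambda * A * S / (a + A) - d * S
    | 2 => m2 * phi * alpha * X * I / (c + X) + lambda * A * S / (a + A) - (d + delta) * I
    | _ => gamma + sigma * (S + I) - eta * A
    end.

Definition evec (R : realType) (j : 'I_4) : st R := fun k => if k == j then 1 else 0.

Definition jacobian (R : realType) (F : st R -> st R) (x : st R) : 'M[R]_4 :=
  \matrix_(i < 4, j < 4)
    derive1 (fun t : R => F (fun k => x k + t * evec R j k) i) 0.

Definition eigenvalue (R : realType) (M : 'M[R]_4) (z : R[i]) : Prop :=
  root (map_poly (fun t : R => (t%:C)%C) (char_poly M)) z.

Definition locally_stable (R : realType) (F : st R -> st R) (x : st R) : Prop :=
  forall z : R[i], eigenvalue (jacobian F x) z -> Re z < 0.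

Definition unstable (R : realType) (F : st R -> st R) (x : st R) : Prop :=
  exists z : R[i], eigenvalue (jacobian F x) z /\ 0 < Re z.

Definition E1 (R : realType) (K gamma eta : R) : st R :=
  fun i => match val i with 0 => K | 3 => gamma / eta | _ => 0 end.

(* Main.v *)
Require Import Defs.
From HB Require Import structures.
From mathcomp Require Import all_boot all_order all_algebra.
From mathcomp Require Import all_classical all_reals all_analysis.
From mathcomp.real_closed Require Import complex.
From mathcomp Require Import ring lra.
Import Order.TTheory GRing.Theory Num.Theory.
Local Open Scope ring_scope.
Lemma dpoly (R : realType) (p q s : R) :
  derive1 (fun t : R => p + q * t + s * (t * t)) 0 = q.
Proof.
rewrite derive1E derive_val.
  by rewrite scale0r addr0 scaler0 addr0 add0r mul1r scaler1 ?mulr1.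
Qed.
Lemma dquad (R : realType) (f : R -> R) (q : R) :
  (exists s, forall t, f t = f 0 + q * t + s * (t * t)) -> derive1 f 0 = q.
Proof.
case=> s hs; rewrite (_ : f = fun t => f 0 + q * t + s * (t * t)); last first.
  by apply: funext => t; rewrite hs.
exact: dpoly.
Qed.
Lemma i1 : (inord 1 : 'I_4) = Ordinal (isT : 1 < 4)%N.
Proof. by apply: val_inj; rewrite /= inordK. Qed.
Lemma i2 : (inord 2 : 'I_4) = Ordinal (isT : 2 < 4)%N.
Proof. by apply: val_inj; rewrite /= inordK. Qed.
Lemma i3 : (inord 3 : 'I_4) = Ordinal (isT : 3 < 4)%N.
Proof. by apply: val_inj; rewrite /= inordK. Qed.

Section J.
Variables (R : realType) (r K alpha phi c m1 m2 lambda a d delta gamma sigma eta : R).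
Hypothesis (hK : K != 0).
Definition Jm : 'M[R]_4 := \matrix_(i < 4, j < 4)
  match val i, val j with
  | 0, 0 => - r
  | 0, 1 => - (alpha * K / (c + K))
  | 0, 2 => - (phi * alpha * K / (c + K))
  | 1, 1 => m1 * alpha * K / (c + K) - lambda * (gamma / eta) / (a + gamma / eta) - d
  | 2, 1 => lambda * (gamma / eta) / (a + gamma / eta)
  | 2, 2 => m2 * phi * alpha * K / (c + K) - (d + delta)
  | 3, 1 => sigma
  | 3, 2 => sigma
  | 3, 3 => - eta
  | _, _ => 0
  end.

Lemma jacE : Defs.jacobian (pest_field r K alpha phi c m1 m2 lambda a d delta gamma sigma eta)
   (E1 K gamma eta) = Jm.
Proof.
apply/matrixP => i j; rewrite !mxE.
rewrite /pest_field i1 i2 i3.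
case: i => [[|[|[|[|//]]]] Hi]; case: j => [[|[|[|[|//]]]] Hj];
 apply: dquad; rewrite /E1 /evec /=.
all: try (exists 0 => t; rewrite !(mulr0, mul0r, addr0, add0r, subr0, mulr1, oppr0); ring).
exists (- r / K) => t; rewrite !(mulr0, mul0r, addr0, add0r, subr0, mulr1, oppr0). field. exact: hK. Qed.


Lemma charE : char_poly Jm = ('X - (-r)%:P) *
   (('X - (m1 * alpha * K / (c + K) - lambda * (gamma / eta) / (a + gamma / eta) - d)%:P) *
    (('X - (m2 * phi * alpha * K / (c + K) - (d + delta))%:P) * ('X - (- eta)%:P))).
Proof.
rewrite /char_poly (expand_det_col _ ord0) !big_ord_recl big_ord0 !mxE /=.
rewrite !mulr0n polyC0 subr0 !mul0r !addr0 mulr1n polyCN opprK.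
rewrite /cofactor det_trig; last first.
  apply/is_trig_mxP => i j; rewrite !mxE.
  case: i => [[|[|[|//]]] Hi]; case: j => [[|[|[|//]]] Hj] //= _; by rewrite polyC0 subr0.
rewrite !big_ord_recl big_ord0 !mxE /=.
by rewrite expr0 mul1r !mulr1n mulr1.
Qed.
End J.

Theorem theorem3 (R : realType)
  (r K alpha phi c m1 m2 lambda a d delta gamma sigma eta : R)
  (hr : 0 < r) (hK : 0 < K) (halpha : 0 < alpha) (hphi : 0 < phi) (hc : 0 < c)
  (hm1 : 0 < m1) (hm2 : 0 < m2) (hlambda : 0 < lambda) (ha : 0 < a) (hd : 0 < d)
  (hdelta : 0 < delta) (hgamma : 0 < gamma) (hsigma : 0 < sigma) (heta : 0 < eta)
  (hphi1 : phi < 1) (hm12 : m2 < m1) :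
  let F := pest_field r K alpha phi c m1 m2 lambda a d delta gamma sigma eta in
  (m1 * alpha * K / (c + K) < lambda * gamma / (a * eta + gamma) + d /\
   m2 * phi * alpha * K / (c + K) < d + delta ->
   locally_stable F (E1 K gamma eta)) /\
  (m1 * alpha * K / (c + K) > lambda * gamma / (a * eta + gamma) + d \/
   m2 * phi * alpha * K / (c + K) > d + delta ->
   unstable F (E1 K gamma eta)).
Proof.
move=> F.
have hK0 : K != 0 by rewrite gt_eqF.
have hl : lambda * (gamma / eta) / (a + gamma / eta) = lambda * gamma / (a * eta + gamma).
  field; apply/andP; split; rewrite gt_eqF //; nra.
have hJ := @jacE R r K alpha phi c m1 m2 lambda a d delta gamma sigma eta hK0.
have hC := @charE R r K alpha phi c m1 m2 lambda a d delta gamma sigma eta.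
rewrite hl in hC.
set b1 := m1 * alpha * K / (c + K) - lambda * gamma / (a * eta + gamma) - d in hC.
set b2 := m2 * phi * alpha * K / (c + K) - (d + delta) in hC.
have ev : forall z : R[i], Defs.eigenvalue (Defs.jacobian F (E1 K gamma eta)) z <->
   [|| z == (- r)%:C%C, z == b1%:C%C, z == b2%:C%C | z == (- eta)%:C%C].
  move=> z; rewrite /Defs.eigenvalue /F hJ hC.
  rewrite !rmorphM /= !map_polyXsubC !rootM !root_XsubC.
  by [].
have ReC : forall x : R, 'Re (x%:C%C) = x%:C%C.
  by move=> x; rewrite -complexRe.
have L0 : forall x : R, (x%:C%C < 0) = (x < 0) by move=> x; exact: (ltcR x 0).
have G0 : forall x : R, (0 < x%:C%C) = (0 < x) by move=> x; exact: (ltcR 0 x).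
split.
  case=> h1 h2 z /ev.
  case/or4P => /eqP ->; rewrite ReC L0; try lra.
    rewrite /b1; lra.
  rewrite /b2; lra.
case=> h.
  exists b1%:C%C; split; first by apply/ev; rewrite eqxx /= orbT.
  rewrite ReC G0; rewrite /b1; lra.
exists b2%:C%C; split; first by apply/ev; rewrite eqxx /= !orbT.
rewrite ReC G0; rewrite /b2; lra.
Qed.
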